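(* Let $\alpha,\beta\in(0,1]$ and let $L(t,u,v,w):\mathbb{T}^\kappa\times\mathbb{R}^3\to\mathbb{R}$ have continuous second-order partial derivatives in $(u,v,w)$. Consider problem (P): minimize $$\mathcal{L}(y)=\sum_{t=a}^{b-1}L\bigl(t,y(t+1),({}_a\Delta_t^\alpha y)(t),({}_t\Delta_b^\beta y)(t)\bigr)$$ over $y:\mathbb{T}\to\mathbb{R}$ with $y(a)=A$, $y(b)=B$ ($A,B\in\mathbb{R}$ fixed). If $\tilde y$ is a local minimizer for (P), then for all $t\in\mathbb{T}^{\kappa^2}=\{a,\dots,b-2\}$, $$L_u[\tilde y](t)+\bigl({}_t\Delta_{\rho(b)}^{\alpha}L_v[\tilde y]\bigr)(t)+\bigl({}_a\Delta_t^{\beta}L_w[\tilde y]\bigr)(t)=0,$$ where $[y](s)=(s,y(s+1),({}_a\Delta_s^\alpha y)(s),({}_s\Delta_b^\beta y)(s))$ and $L_v[\tilde y]$, $L_w[\tilde y]$ denote the functions $s\mapsto L_v([\tilde y](s))$, $s\mapsto L_w([\tilde y](s))$ on $\{a,\dots,b-1\}$.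
   Context: Let $a\in\mathbb{R}$, $b=a+k$ with $k\in\mathbb{N}$, $k\ge2$, $\mathbb{T}=\{a,\dots,b\}$, $\mathbb{T}^\kappa=\{a,\dots,b-1\}$, $\sigma(t)=t+1$, $\rho(t)=t-1$, $\Delta g(t)=g(t+1)-g(t)$. For real $x,y$, $x^{(y)}:=\Gamma(x+1)/\Gamma(x+1-y)$ (division at a pole yields zero). For $c\in\mathbb{T}$, $g$ on $\{a,\dots,c\}$, $\nu\ge0$: $({}_a\Delta_t^{-\nu}g)(t):=g(t)+\frac{\nu}{\Gamma(\nu+1)}\sum_{s=a}^{t-1}(t+\nu-\sigma(s))^{(\nu-1)}g(s)$ and $({}_t\Delta_c^{-\nu}g)(t):=g(t)+\frac{\nu}{\Gamma(\nu+1)}\sum_{s=t+1}^{c}(s+\nu-\sigma(t))^{(\nu-1)}g(s)$, $t\in\{a,\dots,c\}$. For $0<\alpha\le1$, $\mu=1-\alpha$, and $t\in\{a,\dots,c-1\}$: $({}_a\Delta_t^{\alpha}g)(t):=\Delta({}_a\Delta^{-\mu}g)(t)$, $({}_t\Delta_c^{\alpha}g)(t):=-\Delta({}_t\Delta_c^{-\mu}g)(t)$. Norm on functions $y:\mathbb{T}\to\mathbb{R}$: $\|y\|=\max_{t\in\mathbb{T}^\kappa}|y(t+1)|+\max_{t\in\mathbb{T}^\kappa}|({}_a\Delta_t^\alpha y)(t)|+\max_{t\in\mathbb{T}^\kappa}|({}_t\Delta_b^\beta y)(t)|$. A function $\tilde y$ with $\tilde y(a)=A$, $\tilde y(b)=B$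 is a local minimizer for (P) if there is $\delta>0$ with $\mathcal{L}(\tilde y)\le\mathcal{L}(y)$ for all $y$ with $y(a)=A$, $y(b)=B$, $\|y-\tilde y\|<\delta$. *)

(* Defs.v *)
From Stdlib Require Import Reals Lra Lia Arith ClassicalEpsilon.
Open Scope R_scope.

Fixpoint rsum (f : nat -> R) (n : nat) : R :=
  match n with O => 0 | S m => rsum f m + f m end.

Fixpoint rmax (f : nat -> R) (n : nat) : R :=
  match n with O => 0 | S m => Rmax (rmax f m) (f m) end.

(* Euler Gamma function via Gauss' limit formula
   Gamma x = lim n! n^x / (x (x+1) ... (x+n)),  x not a nonpositive integer *)
Fixpoint poch_prod (x : R) (n : nat) : R :=
  match n with O => x | S m => poch_prod x m * (x + INR (S m)) end.
Definition gauss_seq (x : R) (n : nat) : R :=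
  INR (fact n) * Rpower (INR n) x / poch_prod x n.
Definition Gamma (x : R) : R :=
  epsilon (inhabits 0) (fun l => Un_cv (gauss_seq x) l).

Definition is_pole (z : R) : Prop := exists n : nat, z = - INR n.

(* x^(y) := Gamma(x+1)/Gamma(x+1-y), zero when the denominator is at a pole *)
Definition gpow (x y : R) : R :=
  if excluded_middle_informative (is_pole (x + 1 - y)) then 0
  else Gamma (x + 1) / Gamma (x + 1 - y).

(* Time scale T = {a, a+1, ..., a+k}; a function on T is encoded by
   g : nat -> R, g i = value at a + i.  Offsets n denote t = a + n. *)

(* (_a Delta_t^{-nu} g)(t), t = a + n *)
Definition LFS (a nu : R) (g : nat -> R) (n : nat) : R :=
  g n + nu / Gamma (nu + 1) *
    rsum (fun i => gpow ((a + INR n) + nu - (a + INR i + 1)) (nu - 1) * g i) n.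

(* (_t Delta_c^{-nu} g)(t), t = a + n, c = a + m *)
Definition RFS (a nu : R) (m : nat) (g : nat -> R) (n : nat) : R :=
  g n + nu / Gamma (nu + 1) *
    rsum (fun j => gpow ((a + INR (n + 1 + j)%nat) + nu - (a + INR n + 1)) (nu - 1)
                   * g (n + 1 + j)%nat) (m - n)%nat.

(* left Riemann-Liouville type difference (_a Delta_t^alpha g)(t), t = a+n *)
Definition LFD (a alpha : R) (g : nat -> R) (n : nat) : R :=
  LFS a (1 - alpha) g (n + 1)%nat - LFS a (1 - alpha) g n.

(* right difference (_t Delta_c^beta g)(t), t = a+n, c = a+m *)
Definition RFD (a beta : R) (m : nat) (g : nat -> R) (n : nat) : R :=
  - (RFS a (1 - beta) m g (n + 1)%nat - RFS a (1 - beta) m g n).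

Definition onT (a : R) (y : R -> R) : nat -> R := fun i => y (a + INR i).

Definition Lfun (a : R) (k : nat) (alpha beta : R) (L : R -> R -> R -> R -> R)
  (y : R -> R) : R :=
  rsum (fun n => L (a + INR n) (onT a y (n + 1)%nat) (LFD a alpha (onT a y) n)
                   (RFD a beta k (onT a y) n)) k.

Definition ynorm (a : R) (k : nat) (alpha beta : R) (y : R -> R) : R :=
  rmax (fun n => Rabs (onT a y (n + 1)%nat)) k
  + rmax (fun n => Rabs (LFD a alpha (onT a y) n)) k
  + rmax (fun n => Rabs (RFD a beta k (onT a y) n)) k.

Definition local_minimizer (a : R) (k : nat) (alpha beta : R)
  (L : R -> R -> R -> R -> R) (A B : R) (yt : R -> R) : Prop :=
  yt a = A /\ yt (a + INR k) = B /\
  exists delta, delta > 0 /\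
    forall y : R -> R, y a = A -> y (a + INR k) = B ->
      ynorm a k alpha beta (fun s => y s - yt s) < delta ->
      Lfun a k alpha beta L yt <= Lfun a k alpha beta L y.

Definition app3 (f : R -> R -> R -> R) (i : nat) (x u v w : R) : R :=
  match i with O => f x v w | 1%nat => f u x w | _ => f u v x end.
Definition coord3 (i : nat) (u v w : R) : R :=
  match i with O => u | 1%nat => v | _ => w end.

Definition is_partial3 (f : R -> R -> R -> R) (i : nat) (g : R -> R -> R -> R) : Prop :=
  forall u v w, derivable_pt_lim (fun x => app3 f i x u v w) (coord3 i u v w) (g u v w).

Definition cont3 (f : R -> R -> R -> R) : Prop :=
  forall u v w eps, eps > 0 -> exists delta, delta > 0 /\
    forall u' v' w', Rabs (u' - u) < delta -> Rabs (v' - v) < delta ->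
      Rabs (w' - w) < delta -> Rabs (f u' v' w' - f u v w) < eps.

Definition C2_3 (f : R -> R -> R -> R) : Prop :=
  exists (D : nat -> R -> R -> R -> R) (DD : nat -> nat -> R -> R -> R -> R),
    (forall i, (i < 3)%nat -> is_partial3 f i (D i)) /\
    (forall i, (i < 3)%nat -> cont3 (D i)) /\
    (forall i j, (i < 3)%nat -> (j < 3)%nat -> is_partial3 (D i) j (DD i j)) /\
    (forall i j, (i < 3)%nat -> (j < 3)%nat -> cont3 (DD i j)).

(* Main.v *)
Require Import Defs.
From Stdlib Require Import Reals Lra Lia Arith FunctionalExtensionality.
Open Scope R_scope.

Lemma rsum_ext (f g : nat -> R) n : (forall i, (i < n)%nat -> f i = g i) -> rsum f n = rsum g n.
Proof. induction n; simpl; intros H; auto. rewrite IHn by (intros; apply H; lia). rewrite H by lia. auto. Qed.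

Lemma rsum_plus (f g : nat -> R) n : rsum (fun i => f i + g i) n = rsum f n + rsum g n.
Proof. induction n; simpl. lra. rewrite IHn. lra. Qed.

Lemma rsum_minus (f g : nat -> R) n : rsum (fun i => f i - g i) n = rsum f n - rsum g n.
Proof. induction n; simpl. lra. rewrite IHn. lra. Qed.

Lemma rsum_scal (f : nat -> R) c n : rsum (fun i => c * f i) n = c * rsum f n.
Proof. induction n; simpl. lra. rewrite IHn. lra. Qed.

Definition indic (p i : nat) : R := if Nat.eq_dec i p then 1 else 0.

Lemma rsum_ind (f : nat -> R) s p len :
  rsum (fun j => f j * indic p (s + j)) len =
  if le_dec s p then (if lt_dec p (s + len) then f (p - s)%nat else 0) else 0.
Proof.
  induction len; simpl.
  - destruct (le_dec s p); [destruct (lt_dec p (s+0)); [lia|]|]; lra.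
  - rewrite IHlen. unfold indic. destruct (Nat.eq_dec (s + len) p).
    + subst. destruct (le_dec s (s+len)); [|lia].
      destruct (lt_dec (s+len) (s+len)); [lia|].
      destruct (lt_dec (s+len) (s + S len)); [|lia].
      replace (s + len - s)%nat with len by lia. lra.
    + destruct (le_dec s p); [|lra].
      destruct (lt_dec p (s + len)); destruct (lt_dec p (s + S len)); try lia; lra.
Qed.

Lemma rsum_ind0 (f : nat -> R) p len :
  rsum (fun j => f j * indic p j) len = if lt_dec p len then f p else 0.
Proof.
  rewrite (rsum_ext _ (fun j => f j * indic p (0 + j))) by (intros; reflexivity).
  rewrite rsum_ind. destruct (le_dec 0 p); [|lia].
  replace (p - 0)%nat with p by lia. reflexivity.
Qed.

Lemma rsum_shift (g : nat -> R) p k :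
  rsum (fun m => if le_dec p m then g m else 0) k = rsum (fun j => g (p + j)%nat) (k - p).
Proof.
  induction k. simpl. reflexivity.
  cbn [rsum]. rewrite IHk. destruct (le_dec p k).
  - replace (S k - p)%nat with (S (k - p)) by lia. cbn [rsum].
    replace (p + (k - p))%nat with k by lia. reflexivity.
  - replace (S k - p)%nat with 0%nat by lia. replace (k - p)%nat with 0%nat by lia. simpl. lra.
Qed.

Lemma rsum_trunc (g : nat -> R) q k : (q < k)%nat ->
  rsum (fun m => if le_dec m q then g m else 0) k = rsum g (S q).
Proof.
  intros H. induction k. lia.
  destruct (Nat.eq_dec q k).
  - subst. cbn [rsum]. rewrite (rsum_ext _ g). destruct (le_dec k k); [|lia]. reflexivity.
    intros i Hi. destruct (le_dec i k); [reflexivity|lia].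
  - cbn [rsum]. rewrite IHk by lia. destruct (le_dec k q); [lia|]. cbn [rsum]. lra.
Qed.

Lemma ind_S p n : indic (S p) (S n) = indic p n.
Proof. unfold indic. destruct (Nat.eq_dec (S n) (S p)), (Nat.eq_dec n p); lia || lra. Qed.

Lemma sum_ind_a (f : nat -> R) p k : (p < k)%nat -> rsum (fun n => f n * indic p n) k = f p.
Proof. intros H. rewrite rsum_ind0. destruct (lt_dec p k); lia || lra. Qed.

Lemma sum_ind_b (f : nat -> R) q k : (q < k)%nat -> rsum (fun n => f n * indic (q+1) (n+1)) k = f q.
Proof. intros H. rewrite (rsum_ext _ (fun n => f n * indic q n)). apply sum_ind_a; auto.
  intros i _. replace (q+1)%nat with (S q) by lia. replace (i+1)%nat with (S i) by lia. rewrite ind_S. auto. Qed.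

Lemma INR_diff (n1 n2 n3 n4 : nat) : (n2 + n3 = n1 + n4)%nat -> INR n1 - INR n2 = INR n3 - INR n4.
Proof. intros H. apply (f_equal INR) in H. rewrite !plus_INR in H. lra. Qed.

Lemma gpow_arg a nu y (n1 n2 n3 n4 : nat) : (n2 + n3 = n1 + n4)%nat ->
  gpow (a + INR n1 + nu - (a + INR n2 + 1)) y = gpow (a + INR n3 + nu - (a + INR n4 + 1)) y.
Proof. intros H. f_equal. pose proof (INR_diff _ _ _ _ H). lra. Qed.

Lemma sub2 a al k q (fv : nat -> R) : (q + 2 <= k)%nat ->
  rsum (fun n => LFD a al (indic (q+1)) n * fv n) k = RFD a al (k-1) fv q.
Proof.
  intros Hk. set (p := (q+1)%nat).
  set (c := (1 - al) / Gamma (1 - al + 1)).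
  rewrite (rsum_ext _ (fun n => (fv n * indic p (n+1) - fv n * indic p n)
     + c * (if le_dec p n then fv n * gpow (a + INR (n+1) + (1-al) - (a + INR p + 1)) (1 - al - 1) else 0)
     - c * (if le_dec (S p) n then fv n * gpow (a + INR n + (1-al) - (a + INR p + 1)) (1 - al - 1) else 0))).
  2:{ intros n _. unfold LFD, LFS. fold c. rewrite !rsum_ind0.
      destruct (lt_dec p (n+1)), (le_dec p n), (lt_dec p n), (le_dec (S p) n); try lia; ring. }
  rewrite rsum_minus, rsum_plus, rsum_minus, !rsum_scal, !rsum_shift.
  unfold p. rewrite sum_ind_b by lia. rewrite sum_ind_a by lia.
  unfold RFD, RFS. fold c.
  replace (k - (q+1))%nat with (k - 1 - q)%nat by lia.
  replace (k - S (q+1))%nat with (k - 1 - (q+1))%nat by lia.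
  rewrite (rsum_ext (fun j => fv (q + 1 + j)%nat * _) (fun j => gpow (a + INR (q + 1 + j) + (1 - al) - (a + INR q + 1)) (1 - al - 1) * fv (q + 1 + j)%nat)).
  2:{ intros i _. rewrite Rmult_comm. apply Rmult_eq_compat_r, gpow_arg. lia. }
  rewrite (rsum_ext (fun j => fv (S (q + 1) + j)%nat * _) (fun j => gpow (a + INR (q + 1 + 1 + j) + (1 - al) - (a + INR (q + 1) + 1)) (1 - al - 1) * fv (q + 1 + 1 + j)%nat)).
  2:{ intros i _. rewrite Rmult_comm. replace (S (q+1) + i)%nat with (q+1+1+i)%nat by lia. apply Rmult_eq_compat_r, gpow_arg. lia. }
  ring.
Qed.

Lemma rsum_trunc2 (g : nat -> R) q k : (q <= k)%nat ->
  rsum (fun m => if le_dec (S m) q then g m else 0) k = rsum g q.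
Proof.
  intros H. induction k.
  - assert (q = 0)%nat by lia. subst. reflexivity.
  - destruct (Nat.eq_dec q (S k)).
    + subst. cbn [rsum]. rewrite (rsum_ext _ g). destruct (le_dec (S k) (S k)); [|lia]. reflexivity.
      intros i Hi. destruct (le_dec (S i) (S k)); [reflexivity|lia].
    + cbn [rsum]. rewrite IHk by lia. destruct (le_dec (S k) q); [lia|]. lra.
Qed.

Lemma sub3 a be k q (fw : nat -> R) : (q + 2 <= k)%nat ->
  rsum (fun n => RFD a be k (indic (q+1)) n * fw n) k = LFD a be fw q.
Proof.
  intros Hk. set (p := (q+1)%nat).
  set (c := (1 - be) / Gamma (1 - be + 1)).
  rewrite (rsum_ext _ (fun n => (fw n * indic p n - fw n * indic p (n+1))
     + c * (if le_dec n q then fw n * gpow (a + INR (n+1+(p-(n+1))) + (1-be) - (a + INR n + 1)) (1 - be - 1) else 0)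
     - c * (if le_dec (S n) q then fw n * gpow (a + INR (n+1+1+(p-(n+1+1))) + (1-be) - (a + INR (n+1) + 1)) (1 - be - 1) else 0))).
  2:{ intros n Hn. unfold RFD, RFS. fold c. rewrite !rsum_ind.
      unfold p in *.
      destruct (le_dec (n+1) (q+1)), (lt_dec (q+1) (n+1+(k-n))), (le_dec n q),
        (le_dec (n+1+1) (q+1)), (lt_dec (q+1) (n+1+1+(k-(n+1)))), (le_dec (S n) q); try lia; ring. }
  rewrite rsum_minus, rsum_plus, rsum_minus, !rsum_scal, rsum_trunc, rsum_trunc2 by lia.
  unfold p. rewrite sum_ind_b by lia. rewrite sum_ind_a by lia.
  unfold LFD, LFS. fold c.
  rewrite (rsum_ext (fun m => fw m * _) (fun i => gpow (a + INR (q + 1) + (1 - be) - (a + INR i + 1)) (1 - be - 1) * fw i) (S q)).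
  2:{ intros i Hi. rewrite Rmult_comm. apply Rmult_eq_compat_r, gpow_arg. lia. }
  rewrite (rsum_ext (fun m => fw m * _) (fun i => gpow (a + INR q + (1 - be) - (a + INR i + 1)) (1 - be - 1) * fw i) q).
  2:{ intros i Hi. rewrite Rmult_comm. apply Rmult_eq_compat_r, gpow_arg. lia. }
  replace (S q) with (q+1)%nat by lia.
  ring.
Qed.

Lemma comb a al be k q (fu fv fw : nat -> R) : (q + 2 <= k)%nat ->
  rsum (fun n => indic (q+1) (n+1) * fu n + LFD a al (indic (q+1)) n * fv n
                 + RFD a be k (indic (q+1)) n * fw n) k
  = fu q + RFD a al (k-1) fv q + LFD a be fw q.
Proof.
  intros Hk. rewrite !rsum_plus, sub2, sub3 by lia.
  rewrite (rsum_ext _ (fun n => fu n * indic (q+1) (n+1))) by (intros; ring).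
  rewrite sum_ind_b by lia. ring.
Qed.

Lemma mvt_any (g g' : R -> R) : (forall x, derivable_pt_lim g x (g' x)) ->
  forall x h, exists c, Rabs (c - x) <= Rabs h /\ g (x + h) - g x = h * g' c.
Proof.
  intros Hd x h. destruct (Rtotal_order h 0) as [Hh|[Hh|Hh]].
  - destruct (MVT_cor2 g g' (x+h) x) as [c [E Hc]]; [lra| intros; apply Hd |].
    exists c. split. rewrite Rabs_left by lra. rewrite Rabs_left by lra. lra.
    replace (x + h - x) with h in * by ring. lra.
  - subst. exists x. split. rewrite Rminus_diag, Rabs_R0. lra. rewrite Rplus_0_r. ring.
  - destruct (MVT_cor2 g g' x (x+h)) as [c [E Hc]]; [lra| intros; apply Hd |].
    exists c. split. rewrite Rabs_right by lra. rewrite Rabs_right by lra. lra.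
    rewrite E. ring.
Qed.

Lemma dir_deriv (f D0 D1 D2 : R -> R -> R -> R) u v w a1 a2 a3 :
  (forall u v w, derivable_pt_lim (fun x => f x v w) u (D0 u v w)) ->
  (forall u v w, derivable_pt_lim (fun x => f u x w) v (D1 u v w)) ->
  (forall u v w, derivable_pt_lim (fun x => f u v x) w (D2 u v w)) ->
  cont3 D0 -> cont3 D1 -> cont3 D2 ->
  derivable_pt_lim (fun e => f (u + e * a1) (v + e * a2) (w + e * a3)) 0
    (a1 * D0 u v w + a2 * D1 u v w + a3 * D2 u v w).
Proof.
  intros H0 H1 H2 C0 C1 C2 eps Heps.
  set (M := Rabs a1 + Rabs a2 + Rabs a3).
  assert (HM : 0 <= M) by (unfold M; pose proof (Rabs_pos a1); pose proof (Rabs_pos a2); pose proof (Rabs_pos a3); lra).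
  set (eps' := eps / (M + 1)).
  assert (He' : 0 < eps') by (unfold eps'; apply Rdiv_lt_0_compat; lra).
  destruct (C0 u v w eps' He') as [d0 [Hd0 K0]].
  destruct (C1 u v w eps' He') as [d1 [Hd1 K1]].
  destruct (C2 u v w eps' He') as [d2 [Hd2 K2]].
  set (m := Rmin d0 (Rmin d1 d2)).
  assert (Hm : 0 < m) by (unfold m; repeat apply Rmin_pos; auto).
  assert (Hdel : 0 < m / (M + 1)) by (apply Rdiv_lt_0_compat; lra).
  exists (mkposreal _ Hdel). intros h Hh0 Hh. simpl in Hh.
  assert (Hhm : Rabs h * (M + 1) < m).
  { apply (Rmult_lt_compat_r (M+1)) in Hh; [|lra].
    replace (m / (M + 1) * (M + 1)) with m in Hh by (field; lra). exact Hh. }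
  assert (Hha : forall z, Rabs z <= M -> Rabs (h * z) < m).
  { intros z Hz. rewrite Rabs_mult. pose proof (Rabs_pos h).
    apply Rle_lt_trans with (Rabs h * (M+1)); [|exact Hhm].
    apply Rmult_le_compat_l; lra. }
  assert (Ha1 : Rabs a1 <= M) by (unfold M; pose proof (Rabs_pos a2); pose proof (Rabs_pos a3); lra).
  assert (Ha2 : Rabs a2 <= M) by (unfold M; pose proof (Rabs_pos a1); pose proof (Rabs_pos a3); lra).
  assert (Ha3 : Rabs a3 <= M) by (unfold M; pose proof (Rabs_pos a2); pose proof (Rabs_pos a1); lra).
  assert (m0 : m <= d0) by (unfold m; apply Rmin_l).
  assert (m1 : m <= d1) by (unfold m; eapply Rle_trans; [apply Rmin_r| apply Rmin_l]).
  assert (m2 : m <= d2) by (unfold m; eapply Rle_trans; [apply Rmin_r| apply Rmin_r]).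
  pose proof (Hha _ Ha1) as B1. pose proof (Hha _ Ha2) as B2. pose proof (Hha _ Ha3) as B3.
  set (V := v + h * a2). set (W := w + h * a3).
  destruct (mvt_any (fun x => f x V W) (fun x => D0 x V W) (fun x => H0 x V W) u (h*a1)) as [c1 [Hc1 E1]].
  destruct (mvt_any (fun x => f u x W) (fun x => D1 u x W) (fun x => H1 u x W) v (h*a2)) as [c2 [Hc2 E2]].
  destruct (mvt_any (fun x => f u v x) (fun x => D2 u v x) (fun x => H2 u v x) w (h*a3)) as [c3 [Hc3 E3]].
  simpl in E1, E2, E3.
  rewrite !Rplus_0_l, !Rmult_0_l, !Rplus_0_r. fold V W.
  replace ((f (u + h * a1) V W - f u v w) / h - (a1 * D0 u v w + a2 * D1 u v w + a3 * D2 u v w))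
    with (a1 * (D0 c1 V W - D0 u v w) + a2 * (D1 u c2 W - D1 u v w) + a3 * (D2 u v c3 - D2 u v w)).
  2:{ unfold W in E2. fold V in E1. unfold V in E1. fold W in E1.
      replace (f (u + h * a1) V W - f u v w) with
        (h * (a1 * D0 c1 V W + a2 * D1 u c2 W + a3 * D2 u v c3)).
      field. auto. unfold V, W. unfold V, W in E1, E2, E3. lra. }
  assert (Q0 : Rabs (D0 c1 V W - D0 u v w) < eps').
  { apply K0. lra. unfold V. replace (v + h*a2 - v) with (h*a2) by ring. lra.
    unfold W. replace (w + h*a3 - w) with (h*a3) by ring. lra. }
  assert (Q1 : Rabs (D1 u c2 W - D1 u v w) < eps').
  { apply K1. rewrite Rminus_diag, Rabs_R0. lra. lra.
    unfold W. replace (w + h*a3 - w) with (h*a3) by ring. lra. }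
  assert (Q2 : Rabs (D2 u v c3 - D2 u v w) < eps').
  { apply K2. rewrite Rminus_diag, Rabs_R0. lra. rewrite Rminus_diag, Rabs_R0. lra. lra. }
  eapply Rle_lt_trans. apply Rabs_triang. eapply Rle_lt_trans. apply Rplus_le_compat_r. apply Rabs_triang.
  rewrite !Rabs_mult.
  apply Rle_lt_trans with (M * eps').
  { unfold M. pose proof (Rabs_pos a1). pose proof (Rabs_pos a2). pose proof (Rabs_pos a3).
    pose proof (Rabs_pos (D0 c1 V W - D0 u v w)). pose proof (Rabs_pos (D1 u c2 W - D1 u v w)).
    pose proof (Rabs_pos (D2 u v c3 - D2 u v w)). nra. }
  unfold eps'. apply Rmult_lt_reg_r with (M+1); [lra|].
  replace (M * (eps / (M + 1)) * (M + 1)) with (M * eps) by (field; lra). nra.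
Qed.

Lemma rsum_lin (h f g : nat -> R) e n :
  rsum (fun i => h i * (f i + e * g i)) n = rsum (fun i => h i * f i) n + e * rsum (fun i => h i * g i) n.
Proof. induction n; simpl. ring. rewrite IHn. ring. Qed.

Lemma rsum_sc (h g : nat -> R) e n :
  rsum (fun i => h i * (e * g i)) n = e * rsum (fun i => h i * g i) n.
Proof. induction n; simpl. ring. rewrite IHn. ring. Qed.

Lemma LFS_lin a nu (f g : nat -> R) e n :
  LFS a nu (fun i => f i + e * g i) n = LFS a nu f n + e * LFS a nu g n.
Proof. unfold LFS. rewrite rsum_lin. ring. Qed.

Lemma LFS_sc a nu (g : nat -> R) e n :
  LFS a nu (fun i => e * g i) n = e * LFS a nu g n.
Proof. unfold LFS. rewrite rsum_sc. ring. Qed.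

Lemma RFS_lin a nu m (f g : nat -> R) e n :
  RFS a nu m (fun i => f i + e * g i) n = RFS a nu m f n + e * RFS a nu m g n.
Proof. unfold RFS. rewrite rsum_lin. ring. Qed.

Lemma RFS_sc a nu m (g : nat -> R) e n :
  RFS a nu m (fun i => e * g i) n = e * RFS a nu m g n.
Proof. unfold RFS. rewrite rsum_sc. ring. Qed.

Lemma LFD_lin a al (f g : nat -> R) e n :
  LFD a al (fun i => f i + e * g i) n = LFD a al f n + e * LFD a al g n.
Proof. unfold LFD. rewrite !LFS_lin. ring. Qed.

Lemma LFD_sc a al (g : nat -> R) e n :
  LFD a al (fun i => e * g i) n = e * LFD a al g n.
Proof. unfold LFD. rewrite !LFS_sc. ring. Qed.

Lemma RFD_lin a al m (f g : nat -> R) e n :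
  RFD a al m (fun i => f i + e * g i) n = RFD a al m f n + e * RFD a al m g n.
Proof. unfold RFD. rewrite !RFS_lin. ring. Qed.

Lemma RFD_sc a al m (g : nat -> R) e n :
  RFD a al m (fun i => e * g i) n = e * RFD a al m g n.
Proof. unfold RFD. rewrite !RFS_sc. ring. Qed.

Lemma rmax_sc (F F' : nat -> R) e k : (forall n, F' n = e * F n) ->
  rmax (fun n => Rabs (F' n)) k = Rabs e * rmax (fun n => Rabs (F n)) k.
Proof.
  intros H. induction k; simpl. ring. rewrite IHk, H, Rabs_mult, RmaxRmult. reflexivity.
  apply Rabs_pos.
Qed.

Lemma rmax_nonneg (F : nat -> R) k : 0 <= rmax F k.
Proof. induction k; simpl. lra. eapply Rle_trans. exact IHk. apply Rmax_l. Qed.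

Lemma ynorm_sc a k al be (eta : R -> R) e :
  ynorm a k al be (fun s => e * eta s) = Rabs e * ynorm a k al be eta.
Proof.
  unfold ynorm.
  rewrite (rmax_sc (fun n => onT a eta (n+1)%nat) (fun n => onT a (fun s => e * eta s) (n+1)%nat) e) by (intros; reflexivity).
  rewrite (rmax_sc (fun n => LFD a al (onT a eta) n) (fun n => LFD a al (onT a (fun s => e * eta s)) n) e) by (intros; apply (LFD_sc a al (onT a eta))).
  rewrite (rmax_sc (fun n => RFD a be k (onT a eta) n) (fun n => RFD a be k (onT a (fun s => e * eta s)) n) e) by (intros; apply (RFD_sc a be k (onT a eta))).
  ring.
Qed.

Lemma locmin (Phi : R -> R) l d : derivable_pt_lim Phi 0 l -> 0 < d ->
  (forall e, Rabs e < d -> Phi 0 <= Phi e) -> l = 0.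
Proof.
  intros H Hd Hm. pose (pr := exist _ l H : derivable_pt Phi 0).
  rewrite <- (derive_pt_eq_0 Phi 0 l pr H).
  apply deriv_minimum with (-d) d; try lra.
  intros x H1 H2. apply Hm. apply Rabs_def1; lra.
Qed.

Lemma deriv_rsum (F : nat -> R -> R) (d : nat -> R) k :
  (forall n, (n < k)%nat -> derivable_pt_lim (F n) 0 (d n)) ->
  derivable_pt_lim (fun e => rsum (fun n => F n e) k) 0 (rsum d k).
Proof.
  induction k; intros H; simpl.
  - apply derivable_pt_lim_const.
  - change (derivable_pt_lim (plus_fct (fun e => rsum (fun n => F n e) k) (F k)) 0 (rsum d k + d k)).
    apply derivable_pt_lim_plus. apply IHk; intros; apply H; lia. apply H; lia.
Qed.

Theorem theoremZ (a : R) (k : nat) (alpha beta A B : R)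
  (L : R -> R -> R -> R -> R) (Lu Lv Lw : R -> R -> R -> R -> R) (yt : R -> R) :
  (2 <= k)%nat ->
  0 < alpha <= 1 -> 0 < beta <= 1 ->
  (forall n, (n < k)%nat -> C2_3 (L (a + INR n))) ->
  (forall n, (n < k)%nat -> is_partial3 (L (a + INR n)) 0 (Lu (a + INR n))) ->
  (forall n, (n < k)%nat -> is_partial3 (L (a + INR n)) 1 (Lv (a + INR n))) ->
  (forall n, (n < k)%nat -> is_partial3 (L (a + INR n)) 2 (Lw (a + INR n))) ->
  local_minimizer a k alpha beta L A B yt ->
  let Y := onT a yt in
  let br (F : R -> R -> R -> R -> R) (n : nat) : R :=
    F (a + INR n) (Y (n + 1)%nat) (LFD a alpha Y n) (RFD a beta k Y n) in
  forall n : nat, (n + 2 <= k)%nat ->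
    br Lu n + RFD a alpha (k - 1) (br Lv) n + LFD a beta (br Lw) n = 0.
Proof.
  intros Hk Hal Hbe HC Hu Hv Hw [HA [HB [d [Hd Hmin]]]] Y br q Hq.
  set (p := (q + 1)%nat).
  set (eta := fun s => if Req_dec_T s (a + INR p) then 1 else 0).
  assert (HE : onT a eta = indic p).
  { apply functional_extensionality. intros i. unfold onT, eta, indic.
    destruct (Req_dec_T (a + INR i) (a + INR p)), (Nat.eq_dec i p); auto.
    - exfalso. apply n. apply INR_eq. lra.
    - subst. lra. }
  set (Phi := fun e => Lfun a k alpha beta L (fun s => yt s + e * eta s)).
  set (E := onT a eta).
  set (D := rsum (fun m => E (m+1)%nat * br Lu m + LFD a alpha E m * br Lv m
                          + RFD a beta k E m * br Lw m) k).
  assert (HD : derivable_pt_lim Phi 0 D).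
  { assert (Phi = fun e => rsum (fun m => L (a + INR m) (Y (m+1)%nat + e * E (m+1)%nat)
              (LFD a alpha Y m + e * LFD a alpha E m) (RFD a beta k Y m + e * RFD a beta k E m)) k) as ->.
    { apply functional_extensionality. intros e. unfold Phi, Lfun.
      assert (onT a (fun s => yt s + e * eta s) = fun i => Y i + e * E i) as -> by reflexivity.
      apply rsum_ext. intros m _. rewrite LFD_lin, RFD_lin. reflexivity. }
    apply deriv_rsum. intros m Hm.
    destruct (HC m Hm) as [Dd [DD [HP [HCt _]]]].
    assert (P0 := HP 0%nat ltac:(lia)). assert (P1 := HP 1%nat ltac:(lia)). assert (P2 := HP 2%nat ltac:(lia)).
    pose proof (dir_deriv (L (a + INR m)) (Dd 0%nat) (Dd 1%nat) (Dd 2%nat)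
      (Y (m+1)%nat) (LFD a alpha Y m) (RFD a beta k Y m) (E (m+1)%nat) (LFD a alpha E m) (RFD a beta k E m)
      (fun u v w => P0 u v w) (fun u v w => P1 u v w) (fun u v w => P2 u v w)
      (HCt 0%nat ltac:(lia)) (HCt 1%nat ltac:(lia)) (HCt 2%nat ltac:(lia))) as HH.
    unfold br. 
    rewrite <- (uniqueness_limite _ _ _ _ (P0 (Y (m+1)%nat) (LFD a alpha Y m) (RFD a beta k Y m)) (Hu m Hm _ _ _)).
    rewrite <- (uniqueness_limite _ _ _ _ (P1 (Y (m+1)%nat) (LFD a alpha Y m) (RFD a beta k Y m)) (Hv m Hm _ _ _)).
    rewrite <- (uniqueness_limite _ _ _ _ (P2 (Y (m+1)%nat) (LFD a alpha Y m) (RFD a beta k Y m)) (Hw m Hm _ _ _)).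
    replace (E (m + 1)%nat * Dd 0%nat (Y (m + 1)%nat) (LFD a alpha Y m) (RFD a beta k Y m) +
      LFD a alpha E m * Dd 1%nat (Y (m + 1)%nat) (LFD a alpha Y m) (RFD a beta k Y m) +
      RFD a beta k E m * Dd 2%nat (Y (m + 1)%nat) (LFD a alpha Y m) (RFD a beta k Y m)) with
      (E (m + 1)%nat * Dd 0%nat (Y (m + 1)%nat) (LFD a alpha Y m) (RFD a beta k Y m) +
      LFD a alpha E m * Dd 1%nat (Y (m + 1)%nat) (LFD a alpha Y m) (RFD a beta k Y m) +
      RFD a beta k E m * Dd 2%nat (Y (m + 1)%nat) (LFD a alpha Y m) (RFD a beta k Y m)) by ring.
    exact HH. }
  set (N := ynorm a k alpha beta eta).
  assert (HN : 0 <= N) by (unfold N, ynorm; pose proof (rmax_nonneg (fun n => Rabs (onT a eta (n + 1)%nat)) k);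
     pose proof (rmax_nonneg (fun n => Rabs (LFD a alpha (onT a eta) n)) k);
     pose proof (rmax_nonneg (fun n => Rabs (RFD a beta k (onT a eta) n)) k); lra).
  assert (Hd' : 0 < d / (N + 1)) by (apply Rdiv_lt_0_compat; lra).
  assert (D0 : D = 0).
  { apply (locmin Phi D (d / (N+1)) HD Hd'). intros e He.
    unfold Phi. replace (fun s => yt s + 0 * eta s) with yt
      by (apply functional_extensionality; intros; ring).
    apply Hmin.
    - unfold eta. destruct (Req_dec_T a (a + INR p)).
      + exfalso. assert (INR p = INR 0) by (simpl; lra). apply INR_eq in H. unfold p in H. lia.
      + rewrite HA. ring.
    - unfold eta. destruct (Req_dec_T (a + INR k) (a + INR p)).
      + exfalso. assert (INR k = INR p) by lra. apply INR_eq in H. unfold p in H. lia.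
      + rewrite HB. ring.
    - replace (fun s => yt s + e * eta s - yt s) with (fun s => e * eta s)
        by (apply functional_extensionality; intros; ring).
      rewrite ynorm_sc. fold N.
      apply (Rmult_lt_compat_r (N+1)) in He; [|lra].
      replace (d / (N + 1) * (N + 1)) with d in He by (field; lra).
      pose proof (Rabs_pos e). nra. }
  unfold D, E in D0. rewrite HE in D0. unfold p in D0.
  rewrite comb in D0 by lia. exact D0.
Qed.
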